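(* Assume the prime-tuple hypothesis. Then there exist infinite sets $A, B$ of positive integers such that $A-B=\{a-b : a\in A,\ b\in B\}$ is exactly the set of all integers $\pm p$ with $p$ a (positive) prime and $p>3$; moreover, every such signed prime $r$ has exactly one representation as $r=a-b$ with $a\in A$, $b\in B$.
   Context: Prime-tuple hypothesis: for any finitely many pairs of integers $a_i, b_i$ with $a_i\neq 0$, there are infinitely many integers $x$ such that all the numbers $a_ix+b_i$ are prime, unless there is a prime $p$ such that for every integer $x$ we have $p \mid a_ix+b_i$ for some $i$. *)

(* Defs.v *)
From mathcomp Require Import all_boot all_order all_algebra.
Set Implicit Arguments. Unset Strict Implicit. Unset Printing Implicit Defensive.
Import Order.TTheory GRing.Theory Num.Theory.
Local Open Scope ring_scope.

Definition int_prime (n : int) : bool := prime `|n|%N.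

Definition int_infinite (P : int -> Prop) : Prop :=
  forall N : nat, exists x : int, (N < `|x|)%N /\ P x.

Definition prime_tuple_hypothesis : Prop :=
  forall s : seq (int * int),
    all (fun ab => ab.1 != 0) s ->
    ~ (exists p : nat, prime p /\
         forall x : int, has (fun ab => (p%:Z %| ab.1 * x + ab.2)%Z) s) ->
    int_infinite (fun x => all (fun ab => int_prime (ab.1 * x + ab.2)) s).

Definition signed_prime_gt3 (r : int) : bool :=
  prime `|r|%N && (3 < `|r|)%N.

(* Main.v *)
Require Import Defs.
From mathcomp Require Import all_boot all_order all_algebra.
From mathcomp Require Import zify ring.
From Stdlib Require Import IndefiniteDescription.
Import Order.TTheory GRing.Theory Num.Theory.
Local Open Scope ring_scope.

Definition resz (q : nat) (z : int) : nat := `|(z %% q%:Z)%Z|%N.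

Lemma resz_nat q (n : nat) : resz q n%:Z = (n %% q)%N.
Proof. by rewrite /resz modz_nat absz_nat. Qed.

Lemma resz_lt q z : (0 < q)%N -> (resz q z < q)%N.
Proof.
move=> q0; rewrite /resz.
have h1 : (0 <= (z %% q%:Z)%Z) by apply: modz_ge0; rewrite eqz_nat -lt0n.
have h2 : ((z %% q%:Z)%Z < q%:Z) by apply: ltz_pmod; rewrite ltz_nat.
lia.
Qed.

Lemma resz_cong q z w : (q%:Z %| z - w)%Z -> resz q z = resz q w.
Proof.
by move=> h; rewrite /resz; move: h; rewrite -eqz_mod_dvd => /eqP ->.
Qed.

Lemma resz_dvd q z w : (0 < q)%N -> resz q z = resz q w -> (q%:Z %| z - w)%Z.
Proof.
move=> q0 h; rewrite -eqz_mod_dvd; apply/eqP.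
have nz : q%:Z != 0 by rewrite eqz_nat -lt0n.
have h1 := modz_ge0 z nz; have h2 := modz_ge0 w nz.
move: h; rewrite /resz => h; lia.
Qed.

Lemma resz0 q z : (0 < q)%N -> (q%:Z %| z)%Z = (resz q z == 0%N).
Proof.
move=> q0; apply/idP/idP.
  by move/dvdz_mod0P => h; rewrite /resz h.
rewrite /resz => /eqP h; apply/dvdz_mod0P; lia.
Qed.

Lemma resz_sub q (c : nat) r : (0 < q)%N -> (c < q)%N ->
  resz q (c%:Z - r) = ((c + q - resz q r) %% q)%N.
Proof.
move=> q0 cq; rewrite -resz_nat.
have hr := @resz_lt q r q0.
have e : ((c + q - resz q r)%N)%:Z = c%:Z + q%:Z - (resz q r)%:Z by lia.
rewrite e; apply: resz_cong.
have := @resz_dvd q r (resz q r) q0; rewrite resz_nat modn_small //.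
move=> /(_ erefl) hd.
have -> : c%:Z - r - (c%:Z + q%:Z - (resz q r)%:Z) = - (r - (resz q r)%:Z) - q%:Z by ring.
by rewrite rpredB ?rpredN // dvdzz.
Qed.

Definition repr (A B : seq nat) (r : int) : bool :=
  has (fun a => has (fun b => a%:Z - b%:Z == r) B) A.

Lemma reprP A B r : reflect (exists a b, [/\ a \in A, b \in B & a%:Z - b%:Z = r]) (repr A B r).
Proof.
apply: (iffP hasP).
  by move=> [a aA /hasP [b bB /eqP e]]; exists a, b.
by move=> [a [b [aA bB e]]]; exists a => //; apply/hasP; exists b => //; apply/eqP.
Qed.

Lemma repr_cons A B a b r : repr A B r -> repr (a :: A) (b :: B) r.
Proof.
move/reprP=> [a1 [b1 [h1 h2 h3]]]; apply/reprP; exists a1, b1.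
by rewrite !in_cons h1 h2 !orbT.
Qed.

Lemma repr_new A B a b : repr (a :: A) (b :: B) (a%:Z - b%:Z).
Proof. by apply/reprP; exists a, b; rewrite !mem_head. Qed.

Definition emptyc q (A B : seq nat) (rho : nat) : bool :=
  all (fun a => (a %% q)%N != rho) A && all (fun b => (b %% q)%N != rho) B.

Lemma emptyc_cons q A B a b rho :
  emptyc q (a :: A) (b :: B) rho = [&& (a %% q)%N != rho, (b %% q)%N != rho & emptyc q A B rho].
Proof. rewrite /emptyc /=. by case: (_ != rho); case: (_ != rho); case: all; case: all. Qed.

Lemma emptycA q A B rho a : emptyc q A B rho -> a \in A -> (a %% q)%N != rho.
Proof. by case/andP=> /allP h _ /h. Qed.
Lemma emptycB q A B rho b : emptyc q A B rho -> b \in B -> (b %% q)%N != rho.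
Proof. by case/andP=> _ /allP h /h. Qed.
Arguments emptycA {q A B rho a}.
Arguments emptycB {q A B rho b}.

Definition J (q : nat) (A B : seq nat) : Prop :=
  exists U V : pred nat,
   (forall c, U c -> ~~ V c) /\
   (forall r : int, ~~ (q%:Z %| r)%Z -> exists c, (c < q)%N /\ U c /\ V (resz q (c%:Z - r))) /\
   (forall a, a \in A -> ~~ V (a %% q)%N) /\
   (forall b, b \in B -> ~~ U (b %% q)%N) /\
   (~~ repr A B q%:Z -> exists rho, [/\ (rho < q)%N, ~~ U rho, ~~ V rho, emptyc q A B rho &
       (~~ repr A B (- q%:Z) -> exists rho', [/\ (rho' < q)%N, rho' != rho, ~~ U rho', ~~ V rho' & emptyc q A B rho'])]) /\
   (~~ repr A B (- q%:Z) -> exists rho, [/\ (rho < q)%N, ~~ U rho, ~~ V rho & emptyc q A B rho]).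

Definition valid (A B : seq nat) : Prop :=
  (forall a b, a \in A -> b \in B -> signed_prime_gt3 (a%:Z - b%:Z)) /\
  (forall a1 b1 a2 b2, a1 \in A -> b1 \in B -> a2 \in A -> b2 \in B ->
      a1%:Z - b1%:Z = a2%:Z - b2%:Z -> a1 = a2 /\ b1 = b2).

Definition Inv (A B : seq nat) : Prop :=
  valid A B /\ (forall a, a \in A -> (0 < a)%N /\ (6 %| a)%N) /\
  (forall b, b \in B -> [/\ (0 < b)%N, ~~ (2 %| b)%N & ~~ (3 %| b)%N]) /\
  (forall q, prime q -> (5 <= q)%N -> J q A B).

Lemma count_inj_le (T : eqType) (l : seq nat) (v : nat -> T) (S : seq T) :
  uniq l -> {in l &, injective v} -> (count (fun c => v c \in S) l <= size S)%N.
Proof.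
move=> ul inj; rewrite -size_filter -(size_map v).
apply: uniq_leq_size.
  rewrite map_inj_in_uniq ?filter_uniq //.
  by move=> x y; rewrite !mem_filter => /andP[_ hx] /andP[_ hy]; apply: inj.
by move=> x /mapP [y]; rewrite mem_filter => /andP[h _] ->.
Qed.

Lemma count_has_le (T U : Type) (s : seq U) (l : seq T) (k : T -> U -> bool) :
  (count (fun x => has (k x) s) l <= \sum_(f <- s) count (fun x => k x f) l)%N.
Proof.
elim: s => [|f s IH] /=; first by rewrite big_nil count_pred0.
rewrite big_cons.
have := count_predUI (fun x => k x f) (fun x => has (k x) s) l.
have -> : count (fun x => k x f || has (k x) s) l = count (predU (fun x => k x f) (fun x => has (k x) s)) l by [].
move=> e; apply: (leq_trans _ (leq_add (leqnn _) IH)); rewrite -e; exact: leq_addr.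
Qed.

Lemma count_le1 (l : seq nat) (P : pred nat) : uniq l ->
  (forall x y, x \in l -> y \in l -> P x -> P y -> x = y) -> (count P l <= 1)%N.
Proof.
elim: l => [|x l IH] //= /andP[xl ul] h.
case Px: (P x) => /=.
  have -> : count P l = 0%N.
    apply/eqP; rewrite -leqn0 leqNgt -has_count; apply/negP => /hasP [y yl Py].
    have yl' : y \in x :: l by rewrite in_cons yl orbT.
    by have e := h x y (mem_head _ _) yl' Px Py; move: xl; rewrite e yl.
  by [].
apply: IH => // y z yl zl; apply: h; by rewrite in_cons ?yl ?zl orbT.
Qed.

Lemma mem_le_sumn (s : seq nat) x : x \in s -> (x <= sumn s)%N.
Proof.
elim: s => [|y s IH] //=; rewrite in_cons => /orP [/eqP -> | h]; first exact: leq_addr.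
by apply: leq_trans (IH h) _; exact: leq_addl.
Qed.
Lemma pt_sym : prime_tuple_hypothesis -> forall (M : nat) (es : seq int), (0 < M)%N ->
  (forall p, prime p -> (p %| M)%N -> forall e, e \in es -> ~~ (p%:Z %| e)%Z) ->
  (forall p, prime p -> ~~ (p %| M)%N -> (2 * size es < p)%N) ->
  forall N : nat, exists y : nat, (N < y)%N /\ forall e, e \in es -> prime (absz (M%:Z * y%:Z + e)).
Proof.
move=> H M es M0 h1 h2 N.
pose s := [seq (M%:Z, e) | e <- es] ++ [seq (M%:Z, - e) | e <- es].
have hs : all (fun ab : int * int => ab.1 != 0) s.
  rewrite all_cat !all_map; apply/andP; split; apply/allP => e _ /=; rewrite eqz_nat -lt0n //.
have hno : ~ (exists p : nat, prime p /\ forall x : int,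
     has (fun ab : int * int => (p%:Z %| ab.1 * x + ab.2)%Z) s).
  move=> [p [pp hp]].
  case pM: (p %| M)%N.
    have := hp 0; rewrite has_cat !has_map => /orP [] /hasP [e he] /=; rewrite mulr0 add0r.
      by apply/negP; exact: h1.
    by rewrite rpredN; apply/negP; exact: h1.
  have hp2 := h2 p pp (negbT pM).
  pose l := iota 0 (2 * size es)%N.+1.
  have all_has : count (fun x : nat => has (fun ab : int*int => (p%:Z %| ab.1 * x%:Z + ab.2)%Z) s) l = size l.
    apply/eqP; rewrite -all_count; apply/allP => x _; exact: hp.
  have le1 : forall f : int * int, f \in s ->
      (count (fun x : nat => (p%:Z %| (f.1 * x%:Z + f.2)%R)%Z) l <= 1)%N.
    move=> f fs; apply: count_le1; first exact: iota_uniq.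
    have f1 : f.1 = M%:Z by move: fs; rewrite mem_cat => /orP [] /mapP [e _ ->].
    move=> x y; rewrite !mem_iota !add0n => xl yl hx hy.
    have : (p%:Z %| M%:Z * (x%:Z - y%:Z))%Z.
      have -> : M%:Z * (x%:Z - y%:Z) = (f.1 * x%:Z + f.2) - (f.1 * y%:Z + f.2) by rewrite f1; ring.
      by rewrite rpredB.
    rewrite dvdzE abszM absz_nat Euclid_dvdM // pM /= => hd.
    have lt : (`|x%:Z - y%:Z| < p)%N by lia.
    case: (posnP `|x%:Z - y%:Z|) => [z|pos]; first by lia.
    by have := dvdn_leq pos hd; lia.
  have : (size l <= size s)%N.
    rewrite -all_has; apply: (leq_trans (@count_has_le _ _ s l (fun (x : nat) (ab : int * int) => (p%:Z %| (ab.1 * x%:Z + ab.2)%R)%Z))).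
    rewrite big_seq; apply: (@leq_trans (\sum_(f <- s | f \in s) 1)%N).
      by apply: leq_sum => f fs; exact: le1.
    by rewrite -big_seq sum1_size.
  by rewrite /l size_iota size_cat !size_map addnn -mul2n ltnn.
have [x [Nx hx]] := H s hs hno N.
exists `|x|%N; split; first by [].
move=> e he.
case: (boolP (0 <= x)) => x0.
  have := allP hx (M%:Z, e); rewrite mem_cat map_f // => /(_ isT); rewrite /int_prime /=.
  by have -> : (`|x|%N)%:Z = x by lia.
have := allP hx (M%:Z, - e); rewrite mem_cat (map_f (fun e => (M%:Z, - e))) ?orbT // => /(_ isT).
rewrite /int_prime /=.
have -> : (`|x|%N)%:Z = - x by lia.
have -> : M%:Z * (- x) + e = - (M%:Z * x + - e) by ring.
by rewrite abszN.
Qed.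
Lemma prime_dvd_signed q d : prime q -> signed_prime_gt3 d -> (q%:Z %| d)%Z ->
  d = q%:Z \/ d = - q%:Z.
Proof.
move=> pq /andP [pd _]; rewrite dvdzE absz_nat dvdn_prime2 // => /eqP e.
lia.
Qed.

Definition pr q (A B : seq nat) (d : int) : nat :=
  head 0%N [seq (a %% q)%N | a <- A & has (fun b => a%:Z - b%:Z == d) B].

Lemma pr_eq q A B d a b : valid A B -> a \in A -> b \in B -> a%:Z - b%:Z = d ->
  pr q A B d = (a %% q)%N.
Proof.
move=> [_ vu] aA bB e; rewrite /pr.
case E: [seq a0 <- A | has (fun b0 => a0%:Z - b0%:Z == d) B] => [|a0 L].
  have : a \in [seq a0 <- A | has (fun b0 => a0%:Z - b0%:Z == d) B].
    by rewrite mem_filter aA andbT; apply/hasP; exists b => //; apply/eqP.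
  by rewrite E.
have : a0 \in [seq a0 <- A | has (fun b0 => a0%:Z - b0%:Z == d) B] by rewrite E mem_head.
rewrite mem_filter /= => /andP [/hasP [b0 b0B /eqP e0] a0A] /=.
have [-> _] := vu a0 b0 a b a0A b0B aA bB (etrans e0 (esym e)).
by [].
Qed.

Lemma mod_range x q : (q <= x < q + q)%N -> (x %% q = x - q)%N.
Proof.
move=> /andP [h1 h2]; rewrite -{1}(subnK h1) modnDr modn_small //; lia.
Qed.

Lemma enter_run q A B t m : prime q -> valid A B -> (size A + 3 <= m)%N -> (0 < t)%N ->
  (t + m + 2 < q)%N ->
  (forall x, x \in A ++ B -> ((x %% q < t.-1) || (t + m + 2 < x %% q))%N) -> J q A B.
Proof.
move=> pq vAB hm t0 hq free.
have [vs vu] := vAB.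
have q0 : (0 < q)%N by exact: prime_gt0.
pose rho1 := if repr A B q%:Z then pr q A B q%:Z else (t + m + 1)%N.
pose rho2 := if repr A B (- q%:Z) && (pr q A B (- q%:Z) != rho1) then pr q A B (- q%:Z)
             else (t + m + 2)%N.
pose resA := [seq (a %% q)%N | a <- A].
pose U := fun c : nat => ((t <= c < t + m)%N || [&& c \in resA, c != rho1 & c != rho2]).
pose V := fun c : nat => [&& (c < q)%N, ~~ U c, c != rho1 & c != rho2].
have freeA : forall a, a \in A -> ((a %% q < t.-1) || (t + m + 2 < a %% q))%N.
  by move=> a aA; apply: free; rewrite mem_cat aA.
have freeB : forall b, b \in B -> ((b %% q < t.-1) || (t + m + 2 < b %% q))%N.
  by move=> b bB; apply: free; rewrite mem_cat bB orbT.
have Frho1 : rho1 = (t + m + 1)%N \/ exists2 a, a \in A & rho1 = (a %% q)%N.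
  rewrite /rho1; case: (boolP (repr A B q%:Z)) => [/reprP [a [b [aA bB e]]]|_]; last by left.
  by right; exists a => //; exact: pr_eq e.
have Frho2 : rho2 = (t + m + 2)%N \/ exists2 a, a \in A & rho2 = (a %% q)%N.
  rewrite /rho2; case: (boolP (repr A B (- q%:Z))) => [/reprP [a [b [aA bB e]]]|_] /=; last by left.
  case: ifP => _; last by left.
  by right; exists a => //; exact: pr_eq e.
have Vfree : forall y, (y < q)%N -> (y < t \/ t + m <= y)%N ->
    (forall x, x \in A -> (x %% q)%N != y) -> y != (t + m + 1)%N -> y != (t + m + 2)%N -> V y.
  move=> y yq yr ny n1 n2; rewrite /V yq /U.
  have h1 : y != rho1.
    case: Frho1 => [->|[a aA ->]] //; by rewrite eq_sym ny.
  have h2 : y != rho2.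
    case: Frho2 => [->|[a aA ->]] //; by rewrite eq_sym ny.
  rewrite h1 h2 /= andbT negb_or; apply/andP; split; first by apply/negP; lia.
  rewrite negb_and; apply/orP; left; apply/negP => /mapP [a aA e].
  by move: (ny a aA); rewrite e eqxx.
exists U, V; split; [|split; [|split; [|split; [|split]]]].
- by move=> c Uc; rewrite /V Uc /= andbF.
- move=> r nr.
  set R := resz q r.
  have Rq : (R < q)%N by exact: resz_lt.
  have R0 : (0 < R)%N by rewrite lt0n -resz0.
  case: (ltnP R m) => Rm.
    exists (t + R - 1)%N; split; first by lia.
    split; first by rewrite /U; apply/orP; left; apply/andP; split; lia.
    rewrite resz_sub //; last by lia.
    have -> : (t + R - 1 + q - R = (t - 1) + q)%N by lia.
    rewrite modnDr modn_small; last by lia.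
    apply: Vfree; try lia.
    by move=> x xA; have := freeA x xA; apply: contraL => /eqP e; lia.
  case: (ltnP (q - R) m) => Rm2.
    exists (t + m - (q - R))%N; split; first by lia.
    split; first by rewrite /U; apply/orP; left; apply/andP; split; lia.
    rewrite resz_sub //; last by lia.
    have -> : (t + m - (q - R) + q - R = t + m)%N by lia.
    rewrite modn_small; last by lia.
    apply: Vfree; try lia.
    by move=> x xA; have := freeA x xA; apply: contraL => /eqP e; lia.
  pose v := fun c : nat => ((c + q - R) %% q)%N.
  pose S := rho1 :: rho2 :: resA.
  have hcnt : (count (fun c => v c \in S) (iota t m) <= size S)%N.
    apply: count_inj_le; first exact: iota_uniq.
    move=> c1 c2; rewrite !mem_iota => h1 h2 /eqP.
    rewrite /v.
    have -> : (c1 + q - R = c1 + (q - R))%N by lia.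
    have -> : (c2 + q - R = c2 + (q - R))%N by lia.
    rewrite eqn_modDr !modn_small; [by move/eqP| lia | lia].
  have : has (predC (fun c => v c \in S)) (iota t m).
    rewrite has_count; have := count_predC (fun c => v c \in S) (iota t m).
    move: hcnt; rewrite size_iota /S /resA /= size_map; lia.
  move=> /hasP [c]; rewrite mem_iota /= => hc vS.
  exists c; split; first by lia.
  split; first by rewrite /U; apply/orP; left; lia.
  rewrite resz_sub //; last by lia.
  move: vS; rewrite /v /S !in_cons !negb_or => /and3P [n1 n2 n3].
  rewrite /V n1 n2 ltn_pmod //= andbT /U (negbTE n3) /= orbF.
  case: (ltnP (c + q - R) q) => hh.
    rewrite modn_small //; apply/negP; lia.
  rewrite mod_range; last by lia.
  apply/negP; lia.
- move=> a aA; apply/negP => /and4P [_ nU n1 n2]; move: nU.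
  by rewrite /U (map_f (fun a => (a %% q)%N)) // n1 n2 orbT.
- move=> b bB; rewrite /U negb_or; apply/andP; split.
    by have := freeB b bB; apply: contraL => /andP [h1 h2]; lia.
  apply/negP => /and3P [/mapP [a aA e] n1 n2].
  have hd : (q%:Z %| a%:Z - b%:Z)%Z by apply: (@resz_dvd q _ _ q0); rewrite !resz_nat e.
  case: (prime_dvd_signed q (a%:Z - b%:Z) pq (vs a b aA bB) hd) => hab.
    move: n1; rewrite /rho1.
    have -> : repr A B q%:Z by apply/reprP; exists a, b.
    by rewrite (@pr_eq q A B _ a b vAB aA bB hab) e eqxx.
  move: n1 n2; rewrite /rho2 /rho1.
  have -> : repr A B (- q%:Z) by apply/reprP; exists a, b.
  rewrite (@pr_eq q A B _ a b vAB aA bB hab) /= -e.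
  by case: ifP => _; case: ifP => //; rewrite eqxx.
- move=> nq.
  have e1 : rho1 = (t + m + 1)%N by rewrite /rho1 (negbTE nq).
  exists rho1; split.
  + by rewrite e1; lia.
  + rewrite /U negb_or negb_and e1; apply/andP; split; first by apply/negP; lia.
    by rewrite eqxx /= !andbF.
  + by rewrite /V eqxx /= !andbF.
  + rewrite e1 /emptyc; apply/andP; split; apply/allP => x xX.
      by have := freeA x xX; apply: contraL => /eqP e; lia.
    by have := freeB x xX; apply: contraL => /eqP e; lia.
  + move=> nq2.
    have e2 : rho2 = (t + m + 2)%N by rewrite /rho2 (negbTE nq2).
    exists rho2; split.
    * by rewrite e2; lia.
    * by rewrite e1 e2; apply/negP; lia.
    * rewrite /U negb_or negb_and e2; apply/andP; split; first by apply/negP; lia.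
      by rewrite eqxx /= !andbF.
    * by rewrite /V eqxx /= !andbF.
    * rewrite e2 /emptyc; apply/andP; split; apply/allP => x xX.
        by have := freeA x xX; apply: contraL => /eqP e; lia.
      by have := freeB x xX; apply: contraL => /eqP e; lia.
- move=> nq2.
  have e2 : rho2 = (t + m + 2)%N by rewrite /rho2 (negbTE nq2).
  exists rho2; split.
  + by rewrite e2; lia.
  + rewrite /U negb_or negb_and e2; apply/andP; split; first by apply/negP; lia.
    by rewrite eqxx /= !andbF.
  + by rewrite /V eqxx /= !andbF.
  + rewrite e2 /emptyc; apply/andP; split; apply/allP => x xX.
      by have := freeA x xX; apply: contraL => /eqP e; lia.
    by have := freeB x xX; apply: contraL => /eqP e; lia.
Qed.
Lemma enter q A B : prime q -> valid A B ->
  ((size A + size B + 1) * (size A + size B + 7) <= q)%N -> J q A B.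
Proof.
move=> pq vAB hq.
set k := (size A + size B)%N.
set L := (k + 7)%N.
have L0 : (0 < L)%N by rewrite /L; lia.
pose S := [seq ((x %% q) %/ L)%N | x <- A ++ B].
have hc : (count (fun j => j \in S) (iota 0 k.+1) <= size S)%N.
  by apply: count_inj_le; [exact: iota_uniq | move=> x y _ _].
have : has (predC (fun j => j \in S)) (iota 0 k.+1).
  rewrite has_count; have := count_predC (fun j => j \in S) (iota 0 k.+1).
  move: hc; rewrite size_iota /S size_map size_cat -/k; lia.
move=> /hasP [j]; rewrite mem_iota add0n /= => hj jS.
have h1 : (j.+1 * L <= k.+1 * L)%N by rewrite leq_mul2r hj orbT.
have h2 : (k.+1 * L <= q)%N by move: hq; rewrite /L -/k addn1.
rewrite mulSn in h1.
apply: (@enter_run q A B (j * L + 1) (k + 3)) => //.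
- by rewrite /k; lia.
- by lia.
- by rewrite /L in h1; lia.
- move=> x xAB.
  have nj : ((x %% q) %/ L)%N != j.
    by apply/negP => /eqP e; move: jS; rewrite /= -e (map_f (fun x => ((x %% q) %/ L)%N)).
  case: (ltnP ((x %% q) %/ L)%N j) => hx.
    by move: hx; rewrite ltn_divLR // => hx; apply/orP; left; lia.
  have : (j.+1 <= (x %% q) %/ L)%N by rewrite ltn_neqAle eq_sym nj hx.
  rewrite leq_divRL // mulSn => hx2; apply/orP; right; rewrite /L in hx2; lia.
Qed.

Lemma resz_modn q (a : nat) z : resz q ((a %% q)%N%:Z + z) = resz q (a%:Z + z).
Proof.
by rewrite /resz {2}(divn_eq a q) PoszD PoszM -addrA modzMDl.
Qed.

Lemma resz_b q (a b : nat) r : a%:Z - b%:Z = r -> (b %% q)%N = resz q ((a %% q)%N%:Z - r).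
Proof.
move=> e; rewrite -resz_nat resz_modn; congr (resz q _); lia.
Qed.

Lemma emptyc_new q A B a b rho rho' : emptyc q A B rho' -> (a %% q)%N = rho -> (b %% q)%N = rho ->
  rho' != rho -> emptyc q (a :: A) (b :: B) rho'.
Proof.
by move=> h ea eb ne; rewrite emptyc_cons ea eb eq_sym ne h.
Qed.
Arguments emptyc_new {q A B a b rho rho'}.

Lemma emptyc_new2 q A B a b rho' (U V : pred nat) : emptyc q A B rho' -> U (a %% q)%N -> V (b %% q)%N ->
  ~~ U rho' -> ~~ V rho' -> emptyc q (a :: A) (b :: B) rho'.
Proof.
move=> h ua vb nu nv; rewrite emptyc_cons h andbT; apply/andP; split.
  by apply/negP => /eqP e; move: nu; rewrite -e ua.
by apply/negP => /eqP e; move: nv; rewrite -e vb.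
Qed.
Arguments emptyc_new2 {q A B a b rho' U V}.

Lemma not_repr_cons A B a b d : ~~ repr (a :: A) (b :: B) d -> ~~ repr A B d.
Proof. by apply: contra; exact: repr_cons. Qed.
Arguments not_repr_cons {A B a b d}.

Lemma choose_res q A B r : prime q -> J q A B -> signed_prime_gt3 r -> ~~ repr A B r ->
  exists c, (c < q)%N /\ [/\ (forall b, b \in B -> (b %% q)%N != c),
     (forall a, a \in A -> (a %% q)%N != resz q (c%:Z - r)) &
     (forall a b : nat, (a %% q)%N = c -> a%:Z - b%:Z = r -> J q (a :: A) (b :: B))].
Proof.
move=> pq [U [V [hd [hc [hA [hB [h4a h4b]]]]]]] sr nr.
have q0 : (0 < q)%N := prime_gt0 pq.
case: (boolP (q%:Z %| r)%Z) => qr.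
  have rr : forall rho, (rho < q)%N -> resz q (rho%:Z - r) = rho.
    move=> rho rq; transitivity (resz q rho%:Z); last by rewrite resz_nat modn_small.
    apply: resz_cong.
    have -> : rho%:Z - r - rho%:Z = - r by ring.
    by rewrite rpredN.
  have [er|er] := prime_dvd_signed q r pq sr qr.
  - have nq : ~~ repr A B q%:Z by rewrite -er.
    have [rho [rq nU nV emp h2]] := h4a nq.
    exists rho; split => //; split.
    + by move=> b bB; exact: emptycB emp bB.
    + by move=> a aA; rewrite rr //; exact: emptycA emp aA.
    move=> a b ea eab.
    have eb : (b %% q)%N = rho by rewrite (@resz_b q a b r eab) ea rr.
    exists U, V; split => //; split => //; split; [|split; [|split]].
    + by move=> a'; rewrite in_cons => /orP [/eqP ->|]; [rewrite ea | exact: hA].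
    + by move=> b'; rewrite in_cons => /orP [/eqP ->|]; [rewrite eb | exact: hB].
    + by move=> nq'; exfalso; move: nq'; rewrite -er -eab repr_new.
    + move=> nq2; have [rho' [r'q ne nU' nV' emp']] := h2 (not_repr_cons nq2).
      by exists rho'; split => //; exact: emptyc_new emp' ea eb ne.
  - have nq2 : ~~ repr A B (- q%:Z) by rewrite -er.
    have [rho [rq nU nV emp]] := h4b nq2.
    exists rho; split => //; split.
    + by move=> b bB; exact: emptycB emp bB.
    + by move=> a aA; rewrite rr //; exact: emptycA emp aA.
    move=> a b ea eab.
    have eb : (b %% q)%N = rho by rewrite (@resz_b q a b r eab) ea rr.
    exists U, V; split => //; split => //; split; [|split; [|split]].
    + by move=> a'; rewrite in_cons => /orP [/eqP ->|]; [rewrite ea | exact: hA].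
    + by move=> b'; rewrite in_cons => /orP [/eqP ->|]; [rewrite eb | exact: hB].
    + move=> nq'; have [rho1 [r1q nU1 nV1 emp1 h1']] := h4a (not_repr_cons nq').
      have [rho1' [r1'q ne1 nU1' nV1' emp1']] := h1' nq2.
      case: (eqVneq rho1 rho) => e1.
        have ne' : rho1' != rho by rewrite -e1.
        exists rho1'; split => //; first exact: emptyc_new emp1' ea eb ne'.
        by move=> nn; exfalso; move: nn; rewrite -er -eab repr_new.
      exists rho1; split => //; first exact: emptyc_new emp1 ea eb e1.
      by move=> nn; exfalso; move: nn; rewrite -er -eab repr_new.
    + by move=> nn; exfalso; move: nn; rewrite -er -eab repr_new.
have [c [cq [Uc Vc]]] := hc r qr.
exists c; split => //; split.
- by move=> b bB; apply/negP => /eqP e; move: (hB b bB); rewrite e Uc.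
- by move=> a aA; apply/negP => /eqP e; move: (hA a aA); rewrite e Vc.
move=> a b ea eab.
have eb : (b %% q)%N = resz q (c%:Z - r) by rewrite (@resz_b q a b r eab) ea.
have Ua : U (a %% q)%N by rewrite ea.
have Vb : V (b %% q)%N by rewrite eb.
exists U, V; split => //; split => //; split; [|split; [|split]].
- move=> a'; rewrite in_cons => /orP [/eqP ->|]; last exact: hA.
  by apply: hd.
- move=> b'; rewrite in_cons => /orP [/eqP ->|]; last exact: hB.
  by apply/negP => Ub; move: (hd _ Ub); rewrite Vb.
- move=> nq'; have [rho [rq nU nV emp h2]] := h4a (not_repr_cons nq').
  exists rho; split => //; first exact: emptyc_new2 emp Ua Vb nU nV.
  move=> nq2; have [rho' [r'q ne nU' nV' emp']] := h2 (not_repr_cons nq2).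
  by exists rho'; split => //; exact: emptyc_new2 emp' Ua Vb nU' nV'.
- move=> nq2; have [rho [rq nU nV emp]] := h4b (not_repr_cons nq2).
  by exists rho; split => //; exact: emptyc_new2 emp Ua Vb nU nV.
Qed.

Lemma mod_sub d M x y : (d %| M)%N -> x = y %[mod M] -> x = y %[mod d].
Proof. by move=> dM e; rewrite -(modn_dvdm x dM) e modn_dvdm. Qed.
Arguments mod_sub {d M x y}.

Lemma dvd_prod_mem q P : q \in P -> (q %| \prod_(x <- P) x)%N.
Proof. by move=> qP; rewrite (big_rem q) //= dvdn_mulr. Qed.

Lemma crt (Pr : nat -> nat -> Prop) (P : seq nat) : uniq P -> all prime P ->
  all (fun q => 5 <= q)%N P ->
  (forall q, q \in P -> exists c, (c < q)%N /\ Pr q c) ->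
  exists c0, (6 %| c0)%N /\ forall q, q \in P -> Pr q (c0 %% q)%N.
Proof.
elim: P => [|q P IH] /=.
  by move=> *; exists 0%N; split.
move=> /andP [qP uP] /andP [pq pP] /andP [q5 P5] h.
have h' : forall q', q' \in P -> exists c, (c < q')%N /\ Pr q' c.
  by move=> q' hq'; apply: h; rewrite in_cons hq' orbT.
have [c0 [c06 hc0]] := IH uP pP P5 h'.
have [c [cq hc]] := h q (mem_head _ _).
pose M := (6 * \prod_(x <- P) x)%N.
have cop : coprime M q.
  rewrite coprime_sym prime_coprime // Euclid_dvdM // negb_or; apply/andP; split.
    rewrite (_ : 6 = 2 * 3)%N // Euclid_dvdM // !dvdn_prime2 //; lia.
  rewrite Euclid_dvd_prod // big_has; apply/hasP => [[x xP]].
  rewrite dvdn_prime2 //; last exact: (allP pP).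
  by move/eqP => e; move: qP; rewrite e xP.
exists (chinese M q c0 c); split.
  have := chinese_modl cop c0 c => e.
  have := mod_sub (dvdn_mulr _ (dvdnn 6)) e.
  by rewrite /dvdn => ->; exact: c06.
move=> q'; rewrite in_cons => /orP [/eqP ->|q'P].
  by rewrite chinese_modr // modn_small.
have e := mod_sub (dvdn_mull 6 (@dvd_prod_mem _ _ q'P)) (chinese_modl cop c0 c).
by rewrite e; exact: hc0.
Qed.
Lemma spg_odd r : signed_prime_gt3 r -> ~~ (2%:Z %| r)%Z /\ ~~ (3%:Z %| r)%Z.
Proof.
move=> /andP [pr gt3]; rewrite !dvdzE !absz_nat !dvdn_prime2 //; lia.
Qed.
Arguments spg_odd {r}.

Lemma prime_ge5 p : prime p -> p != 2%N -> p != 3%N -> (5 <= p)%N.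
Proof. by case: p => [|[|[|[|[|p]]]]]. Qed.
Arguments prime_ge5 {p}.

Lemma dvd6 p : prime p -> (p %| 6)%N -> p = 2%N \/ p = 3%N.
Proof.
move=> pp; rewrite (_ : 6 = 2 * 3)%N // Euclid_dvdM // !dvdn_prime2 //.
by case/orP => /eqP ->; [left|right].
Qed.
Arguments dvd6 {p}.

Lemma vu_new (A B : seq nat) (a b : nat) (r : int) (sA sB : nat) :
  (forall a1 b1 a2 b2, a1 \in A -> b1 \in B -> a2 \in A -> b2 \in B ->
      a1%:Z - b1%:Z = a2%:Z - b2%:Z -> a1 = a2 /\ b1 = b2) ->
  (forall x, x \in A -> (0 < x <= sA)%N) -> (forall x, x \in B -> (0 < x <= sB)%N) ->
  (sA + sB + 2 * `|r| + 4 < a)%N -> b%:Z = a%:Z - r ->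
  (forall x z, x \in A -> z \in B -> x%:Z - z%:Z != r) ->
  forall a1 b1 a2 b2, a1 \in a :: A -> b1 \in b :: B -> a2 \in a :: A -> b2 \in b :: B ->
      a1%:Z - b1%:Z = a2%:Z - b2%:Z -> a1 = a2 /\ b1 = b2.
Proof.
move=> vu Ab Bb ha eb hnr a1 b1 a2 b2; rewrite !in_cons.
case/orP => [/eqP ->|i1]; case/orP => [/eqP ->|i2]; case/orP => [/eqP ->|i3]; case/orP => [/eqP ->|i4] e.
all: try (have := Ab _ i1); try (have := Bb _ i2); try (have := Ab _ i3); try (have := Bb _ i4).
all: try (have := hnr _ _ i3 i4); try (have := hnr _ _ i1 i2).
all: try (move=> *; exact: vu).
all: clear vu Ab Bb hnr.
all: lia.
Qed.

Lemma step : prime_tuple_hypothesis -> forall A B r N, Inv A B -> signed_prime_gt3 r ->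
  ~~ repr A B r ->
  exists a b : nat, [/\ (N < a)%N, (N < b)%N, a%:Z - b%:Z = r & Inv (a :: A) (b :: B)].
Proof.
move=> H A B r N [[vs vu] [hA [hB hJ]]] sr nr.
set k := (size A + size B)%N.
set Q0 := ((k + 3) * (k + 9))%N.
pose P := [seq q <- iota 5 Q0 | prime q].
pose Pr := fun q c => [/\ (forall b, b \in B -> (b %% q)%N != c),
     (forall a, a \in A -> (a %% q)%N != resz q (c%:Z - r)) &
     (forall a b : nat, (a %% q)%N = c -> a%:Z - b%:Z = r -> J q (a :: A) (b :: B))].
have hP : forall q, q \in P -> exists c, (c < q)%N /\ Pr q c.
  move=> q; rewrite mem_filter mem_iota => /andP [pq /andP [q5 _]].
  exact: (@choose_res q A B r pq (hJ q pq q5) sr nr).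
have uP : uniq P by rewrite filter_uniq // iota_uniq.
have pP : all prime P by exact: filter_all.
have P5 : all (fun q => 5 <= q)%N P.
  by apply/allP => q; rewrite mem_filter mem_iota => /andP [_ /andP [h _]].
have [c0 [c06 hc0]] := @crt Pr P uP pP P5 hP.
pose M := (6 * \prod_(x <- P) x)%N.
have M0 : (0 < M)%N.
  rewrite /M muln_gt0 /= big_seq; apply: prodn_cond_gt0 => x xP.
  exact: prime_gt0 (allP pP x xP).
have [r2 r3] := spg_odd sr.
have dvdM : forall p, prime p -> (p %| M)%N -> [\/ p = 2%N, p = 3%N | p \in P].
  move=> p pp; rewrite Euclid_dvdM // => /orP [/(dvd6 pp) [->|->]|]; [by constructor 1|by constructor 2|].
  rewrite Euclid_dvd_prod // big_has => /hasP [x xP].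
  by rewrite dvdn_prime2 //; [move/eqP ->; constructor 3 | exact: (allP pP)].
pose es := [seq c0%:Z - b%:Z | b <- B] ++ [seq c0%:Z - r - a%:Z | a <- A].
have h1 : forall p, prime p -> (p %| M)%N -> forall e, e \in es -> ~~ (p%:Z %| e)%Z.
  move=> p pp pM e; rewrite mem_cat => /orP [] /mapP [x xX ->].
  - case: (dvdM p pp pM) => [->|->|pP'].
    + by have := hB x xX; case=> _ h2 _; lia.
    + by have := hB x xX; case=> _ _ h3; lia.
    + have [hb _ _] := hc0 p pP'.
      apply/negP => /(resz_cong) ee; move: (hb x xX).
      by rewrite -!resz_nat ee eqxx.
  - case: (dvdM p pp pM) => [->|->|pP'].
    + by have := hA x xX; case=> _ h6; lia.
    + by have := hA x xX; case=> _ h6; lia.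
    + have [_ ha _] := hc0 p pP'.
      apply/negP => /(resz_cong) ee; move: (ha x xX).
      by rewrite resz_modn ee resz_nat eqxx.
have h2 : forall p, prime p -> ~~ (p %| M)%N -> (2 * size es < p)%N.
  move=> p pp npM.
  have p2 : p != 2%N by apply/negP => /eqP e; move: npM; rewrite e /M dvdn_mulr.
  have p3 : p != 3%N.
    by apply/negP => /eqP e; move: npM; rewrite e /M (_ : 6 = 3 * 2)%N // -mulnA dvdn_mulr.
  have p5 := prime_ge5 pp p2 p3.
  have pnP : p \notin P.
    by apply/negP => pP'; move: npM; rewrite /M dvdn_mull // dvd_prod_mem.
  move: pnP; rewrite mem_filter mem_iota pp /= size_cat !size_map -/k.
  rewrite /Q0; nia.
pose big := (N + sumn A + sumn B + 2 * `|r| + 4)%N.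
have [y [ybig hy]] := pt_sym H M es M0 h1 h2 big.
pose a := (M * y + c0)%N.
have ea : a%:Z = M%:Z * y%:Z + c0%:Z by rewrite /a PoszD PoszM.
have ay : (y <= a)%N by rewrite /a; apply: leq_trans (leq_addr _ _); exact: leq_pmull.
pose b := `|a%:Z - r|%N.
have eb : b%:Z = a%:Z - r by rewrite /b; lia.
have Ab : forall x, x \in A -> (0 < x <= sumn A)%N.
  by move=> x xA; rewrite mem_le_sumn // andbT; case: (hA x xA).
have Bb : forall x, x \in B -> (0 < x <= sumn B)%N.
  by move=> x xB; rewrite mem_le_sumn // andbT; case: (hB x xB).
have hpa : forall x, x \in B -> prime `|a%:Z - x%:Z|.
  move=> x xB; have := hy (c0%:Z - x%:Z); rewrite mem_cat (map_f (fun b => c0%:Z - b%:Z)) //.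
  by move=> /(_ isT); rewrite ea (_ : M%:Z * y%:Z + c0%:Z - x%:Z = M%:Z * y%:Z + (c0%:Z - x%:Z)) //; ring.
have hpb : forall x, x \in A -> prime `|x%:Z - b%:Z|.
  move=> x xA; have := hy (c0%:Z - r - x%:Z).
  rewrite mem_cat (map_f (fun a => c0%:Z - r - a%:Z)) ?orbT // => /(_ isT).
  have -> : x%:Z - b%:Z = - (M%:Z * y%:Z + (c0%:Z - r - x%:Z)) by rewrite eb ea; ring.
  by rewrite abszN.
have hnr : forall x z, x \in A -> z \in B -> x%:Z - z%:Z != r.
  move=> x z xA zB; apply/negP => /eqP e; move/negP: nr; apply.
  by apply/reprP; exists x, z.
have vs' : forall a1 b1, a1 \in a :: A -> b1 \in b :: B -> signed_prime_gt3 (a1%:Z - b1%:Z).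
  move=> a1 b1; rewrite !in_cons => /orP [/eqP ->|h1'] /orP [/eqP ->|h2'].
  - by rewrite eb (_ : a%:Z - (a%:Z - r) = r) //; ring.
  - rewrite /signed_prime_gt3 hpa //=; have := Bb b1 h2'; lia.
  - rewrite /signed_prime_gt3 hpb //=; have := Ab a1 h1'; lia.
  - exact: vs.
have vu' := @vu_new A B a b r (sumn A) (sumn B) vu Ab Bb ltac:(rewrite /big in ybig; lia) eb hnr.
have vAB' : valid (a :: A) (b :: B) by split.
exists a, b; split.
- rewrite /big in ybig; lia.
- rewrite /big in ybig; lia.
- by rewrite eb; ring.
split => //; split; [|split].
- move=> x; rewrite in_cons => /orP [/eqP ->|xA]; last exact: hA.
  split; first by lia.
  by rewrite /a dvdn_add // dvdn_mulr // dvdn_mulr.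
- move=> x; rewrite in_cons => /orP [/eqP ->|xB]; last exact: hB.
  have a6 : (6 %| a)%N by rewrite /a dvdn_add // dvdn_mulr // dvdn_mulr.
  rewrite /big in ybig; split; lia.
- move=> q pq q5.
  case: (boolP (q \in P)) => qP.
    have [_ _ hq] := hc0 q qP.
    apply: hq; last by rewrite eb; ring.
    have qM : (q %| M)%N by rewrite /M dvdn_mull // dvd_prod_mem.
    by rewrite /a -modnDml (eqP (dvdn_mulr y qM)) add0n.
  apply: enter => //=.
  move: qP; rewrite mem_filter mem_iota pq q5 /= -/k /Q0; nia.
Qed.
Definition Jb q A B (U V : seq nat) rho1 rho2 : bool :=
  [&& all (fun c => c \notin V) U,
      all (fun R => has (fun c => (c < q)%N && (((c + q - R) %% q)%N \in V)) U) (iota 1 q.-1),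
      all (fun a => (a %% q)%N \notin V) A,
      all (fun b => (b %% q)%N \notin U) B &
      (~~ repr A B q%:Z ==> [&& (rho1 < q)%N, rho1 \notin U, rho1 \notin V, emptyc q A B rho1 &
            (~~ repr A B (- q%:Z) ==> [&& (rho2 < q)%N, rho2 != rho1, rho2 \notin U, rho2 \notin V &
                  emptyc q A B rho2])]) &&
      (~~ repr A B (- q%:Z) ==> [&& (rho2 < q)%N, rho2 \notin U, rho2 \notin V & emptyc q A B rho2])].

Lemma Jb_J q A B U V rho1 rho2 : (0 < q)%N -> Jb q A B U V rho1 rho2 -> J q A B.
Proof.
move=> q0 /and5P [h1 h2 h3 h4 /andP [h5 h6]].
exists (fun c => c \in U), (fun c => c \in V); split; [|split; [|split; [|split; [|split]]]].
- by move=> c cU; exact: (allP h1 c cU).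
- move=> r nr; set R := resz q r.
  have Rq : (R < q)%N by exact: resz_lt.
  have R0 : (0 < R)%N by rewrite lt0n -resz0.
  have := allP h2 R; rewrite mem_iota.
  have -> : (1 <= R < 1 + q.-1)%N by lia.
  move=> /(_ isT) /hasP [c cU /andP [cq cV]].
  by exists c; split => //; split => //; rewrite resz_sub.
- by move=> a aA; exact: (allP h3 a aA).
- by move=> b bB; exact: (allP h4 b bB).
- move=> nq; move: h5; rewrite nq /= => /and5P [r1 n1 n2 e1 h].
  exists rho1; split => // nq2; move: h; rewrite nq2 /= => /and5P [r2 ne m1 m2 e2].
  by exists rho2; split.
- move=> nq2; move: h6; rewrite nq2 /= => /and4P [r2 m1 m2 e2].
  by exists rho2; split.
Qed.

Definition init : (seq nat * seq nat)%type := ([:: 6%N], [:: 1%N; 11%N]).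

Lemma Inv_init : Inv init.1 init.2.
Proof.
split; [split|split; [|split]].
- move=> a b; rewrite /= !inE => /eqP -> /orP [/eqP ->|/eqP ->]; by vm_compute.
- move=> a1 b1 a2 b2; rewrite /= !inE => /eqP -> _ /eqP -> _ e; split => //; lia.
- by move=> a; rewrite /= inE => /eqP ->.
- by move=> b; rewrite /= !inE => /orP [/eqP ->|/eqP ->].
move=> q pq q5.
case: (ltnP q 23) => q23.
  have : q \in [seq p <- iota 5 18 | prime p] by rewrite mem_filter mem_iota pq; lia.
  have -> : [seq p <- iota 5 18 | prime p] = [:: 5; 7; 11; 13; 17; 19]%N by vm_compute.
  rewrite !inE => /orP [/eqP ->|/orP [/eqP ->|/orP [/eqP ->|/orP [/eqP ->|/orP [/eqP ->|/eqP ->]]]]].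
  - by apply: (@Jb_J 5 _ _ [:: 0; 2]%N [:: 3; 4]%N 0 0); vm_compute.
  - by apply: (@Jb_J 7 _ _ [:: 0; 5; 6]%N [:: 1; 4]%N 2 3); vm_compute.
  - by apply: (@Jb_J 11 _ _ [:: 2; 3]%N [:: 0; 1; 4; 5; 7; 9]%N 8 10); vm_compute.
  - by apply: (@Jb_J 13 _ _ [:: 0; 2]%N [:: 3; 4; 7; 8; 11; 12]%N 5 9); vm_compute.
  - by apply: (@Jb_J 17 _ _ [:: 0; 2]%N [:: 3; 4; 7; 8; 11; 12; 15; 16]%N 5 9); vm_compute.
  - by apply: (@Jb_J 19 _ _ [:: 0; 2]%N [:: 1; 4; 5; 8; 9; 12; 13; 16; 17]%N 3 7); vm_compute.
apply: (@enter_run q _ _ 13 4) => //=.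
- split.
  + move=> a b; rewrite /= !inE => /eqP -> /orP [/eqP ->|/eqP ->]; by vm_compute.
  + move=> a1 b1 a2 b2; rewrite /= !inE => /eqP -> _ /eqP -> _ e; split => //; lia.
- lia.
- move=> x; rewrite !inE => /orP [/eqP ->|/orP [/eqP ->|/eqP ->]]; rewrite modn_small; lia.
Qed.
Definition g (n : nat) : int := if odd n then - (n./2)%:Z else (n./2)%:Z.

Lemma g_surj r : exists n, g n = r.
Proof.
case: r => k.
  by exists (k.*2); rewrite /g odd_double doubleK.
exists (k.+1).*2.+1; rewrite /g.
have -> : odd (k.+1).*2.+1 = true by rewrite /= odd_double.
have -> : ((k.+1).*2.+1)./2 = k.+1 by lia.
by rewrite NegzE.
Qed.

Lemma fresh A B : exists r, signed_prime_gt3 r /\ ~~ repr A B r.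
Proof.
have [p hp pp] := prime_above (sumn A + 3).
exists p%:Z; split.
  by rewrite /signed_prime_gt3 absz_nat pp /=; lia.
apply/negP => /reprP [a [b [aA bB e]]].
have := @mem_le_sumn A a aA; lia.
Qed.

Definition state := (seq nat * seq nat)%type.

Definition Tr (n : nat) (s s' : state) : Prop :=
  Inv s'.1 s'.2 /\ {subset s.1 <= s'.1} /\ {subset s.2 <= s'.2} /\
  (signed_prime_gt3 (g n) -> repr s'.1 s'.2 (g n)) /\
  (exists2 a, a \in s'.1 & (n < a)%N) /\ (exists2 b, b \in s'.2 & (n < b)%N).

Lemma trans (H : prime_tuple_hypothesis) n (s : state) : Inv s.1 s.2 -> exists s', Tr n s s'.
Proof.
case: s => A B /= hI.
have sub : forall (x : nat) (X : seq nat), {subset X <= x :: X}.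
  by move=> x X y yX; rewrite in_cons yX orbT.
case: (boolP (signed_prime_gt3 (g n) && ~~ repr A B (g n))) => [/andP [sg ng]| c].
  have [a [b [na nb e hI']]] := step H A B (g n) n hI sg ng.
  exists (a :: A, b :: B); split => //; split; first exact: sub.
  split; first exact: sub.
  split; first by move=> _; apply/reprP; exists a, b; rewrite !mem_head.
  by split; [exists a; rewrite ?mem_head | exists b; rewrite ?mem_head].
have [r [sr nr]] := fresh A B.
have [a [b [na nb e hI']]] := step H A B r n hI sr nr.
exists (a :: A, b :: B); split => //; split; first exact: sub.
split; first exact: sub.
split.
  by move=> sg; apply: repr_cons; move: c; rewrite sg /= negbK.
by split; [exists a; rewrite ?mem_head | exists b; rewrite ?mem_head].
Qed.

Fixpoint build (H : prime_tuple_hypothesis) (n : nat) : {s : state | Inv s.1 s.2} :=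
  match n with
  | 0 => exist _ init Inv_init
  | n'.+1 =>
      let s := build H n' in
      let X := constructive_indefinite_description _ (trans H n' (proj1_sig s) (proj2_sig s)) in
      exist _ (proj1_sig X) (proj1 (proj2_sig X))
  end.

Lemma build_step H n : Tr n (proj1_sig (build H n)) (proj1_sig (build H n.+1)).
Proof. by rewrite /=; exact: (proj2_sig (constructive_indefinite_description _ _)). Qed.

Lemma build_mono H n m : (n <= m)%N ->
  {subset (proj1_sig (build H n)).1 <= (proj1_sig (build H m)).1} /\
  {subset (proj1_sig (build H n)).2 <= (proj1_sig (build H m)).2}.
Proof.
elim: m => [|m IH].
  by rewrite leqn0 => /eqP ->; split.
rewrite leq_eqVlt => /orP [/eqP ->|]; first by split.
rewrite ltnS => /IH [h1 h2].
have [_ [s1 [s2 _]]] := build_step H m.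
by split => x hx; [apply: s1; apply: h1 | apply: s2; apply: h2].
Qed.

Theorem theorem2 :
  prime_tuple_hypothesis ->
  exists A B : nat -> Prop,
    (forall a, A a -> (0 < a)%N) /\
    (forall b, B b -> (0 < b)%N) /\
    (forall N : nat, exists a, (N < a)%N /\ A a) /\
    (forall N : nat, exists b, (N < b)%N /\ B b) /\
    (forall a b, A a -> B b -> signed_prime_gt3 (a%:Z - b%:Z)) /\
    (forall r : int, signed_prime_gt3 r ->
       exists! ab : nat * nat, A ab.1 /\ B ab.2 /\ r = ab.1%:Z - ab.2%:Z).
Proof.
move=> H.
pose st n := proj1_sig (build H n).
have inv : forall n, Inv (st n).1 (st n).2 := fun n => proj2_sig (build H n).
have mono : forall n m, (n <= m)%N -> {subset (st n).1 <= (st m).1} /\ {subset (st n).2 <= (st m).2}.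
  by move=> n m; exact: build_mono.
exists (fun a => exists n, a \in (st n).1), (fun b => exists n, b \in (st n).2).
split; [|split; [|split; [|split; [|split]]]].
- move=> a [n an]; have [_ [hA _]] := inv n; by case: (hA a an).
- move=> b [n bn]; have [_ [_ [hB _]]] := inv n; by case: (hB b bn).
- move=> N; have [_ [_ [_ [_ [[a aS aN] _]]]]] := build_step H N.
  by exists a; split => //; exists N.+1.
- move=> N; have [_ [_ [_ [_ [_ [b bS bN]]]]]] := build_step H N.
  by exists b; split => //; exists N.+1.
- move=> a b [n an] [m bm].
  have [[vs _] _] := inv (maxn n m).
  apply: vs; [apply: (proj1 (mono n _ _)) | apply: (proj2 (mono m _ _))] => //.
  + by rewrite leq_maxl.
  + by rewrite leq_maxr.
move=> r sr; have [n gn] := g_surj r.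
have [_ [_ [_ [hr _]]]] := build_step H n.
rewrite gn in hr; have /reprP [a [b [aS bS e]]] := hr sr.
exists (a, b); split.
  by split; [exists n.+1 | split; [exists n.+1 | rewrite e]].
move=> [a' b'] [[k ak] [[k' bk] e']] /=.
pose K := maxn (maxn n.+1 k) k'.
have [[_ vu] _] := inv K.
have l1 : (n.+1 <= K)%N by rewrite /K; lia.
have l2 : (k <= K)%N by rewrite /K; lia.
have l3 : (k' <= K)%N by rewrite /K; lia.
have [ea eb] := vu a b a' b' (proj1 (mono _ _ l1) _ aS) (proj2 (mono _ _ l1) _ bS)
  (proj1 (mono _ _ l2) _ ak) (proj2 (mono _ _ l3) _ bk) (etrans e e').
by rewrite ea eb.
Qed.
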